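(* For an integer $n>1$ define, for every integer $1\le r\le n-1$, $$E^{C}_{n}(r)=\frac{r}{n}\sum_{k=r+1}^{n}\frac{1-\frac{k}{n}}{k-1},$$ and let $\mathcal{M}(n)$ be a value of $r$ at which $E^C_n$ attains its maximum. Let $\rho=-\frac12 W(-2e^{-2})=0.20318\dots$. Then (i) $\lim_{n\to\infty}\mathcal{M}(n)/n=\rho$; (ii) $\lim_{n\to\infty}E^C_n(\mathcal{M}(n))=\lim_{n\to\infty}E^C_n(\lfloor\rho n\rfloor)=\rho(1-\rho)=0.16190\dots$.
   Context: $W$ denotes the principal (main) branch of the Lambert $W$ function, i.e. the inverse of $z\mapsto ze^z$ on $[-1,\infty)$, so that $z=W(ze^z)$ for $z\ge -1$. *)

(* Defs.v *)
From Stdlib Require Import Reals Lra Lia List ClassicalEpsilon.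
From Coquelicot Require Import Coquelicot.
Import ListNotations.
Open Scope R_scope.

(* Principal branch of Lambert W: for x >= -1/e, the unique z >= -1 with
   z * exp z = x (chosen by Hilbert's epsilon; outside the domain the
   value is irrelevant/unspecified). *)
Definition LambertW (x : R) : R :=
  epsilon (inhabits 0%R) (fun z => -1 <= z /\ z * exp z = x).

Definition EC (n r : nat) : R :=
  (INR r / INR n) *
  fold_right Rplus 0
    (map (fun k : nat => (1 - INR k / INR n) / (INR k - 1)) (seq (r + 1) (n - r))).

Definition rho : R := - (1/2) * LambertW (-2 * exp (-2)).

Definition nat_floor (x : R) : nat := Z.to_nat (Int_part x).

(* Main.v *)
Require Import Defs.
From Stdlib Require Import Reals Lra Lia List ClassicalEpsilon ZArith.
From Coquelicot Require Import Coquelicot.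
Import ListNotations.
Open Scope R_scope.

Lemma ln_lt_sub1 u : 0 < u -> u <> 1 -> ln u < u - 1.
Proof.
  intros Hu H1. assert (ln u <> 0).
  { intro E. apply H1. rewrite <- (exp_ln u Hu), E. apply exp_0. }
  pose proof (exp_ineq1 _ H). rewrite exp_ln in H0 by lra. lra.
Qed.

Lemma ln_le_sub1 u : 0 < u -> ln u <= u - 1.
Proof.
  intros Hu. pose proof (exp_ineq1_le (ln u)). rewrite exp_ln in H by lra. lra.
Qed.

Lemma W_spec : -1 <= LambertW (-2 * exp (-2)) /\
   LambertW (-2 * exp (-2)) * exp (LambertW (-2 * exp (-2))) = -2 * exp (-2).
Proof.
  unfold LambertW. apply epsilon_spec.
  assert (Hc : continuity (fun z => z * exp z + 2 * exp (-2))).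
  { apply continuity_plus. apply continuity_mult. apply derivable_continuous, derivable_id.
    apply derivable_continuous, derivable_exp. apply continuity_const. intros a b; reflexivity. }
  assert (He : 2 < exp 1). { pose proof (exp_ineq1 1). lra. }
  assert (Hm : exp (-1) = exp 1 * exp (-2)). { rewrite <- exp_plus. f_equal. lra. }
  pose proof (exp_pos (-2)).
  destruct (IVT _ (-1) 0 Hc) as [z [Hz1 Hz2]].
  - lra.
  - rewrite Hm. nra.
  - rewrite exp_0. lra.
  - exists z. split. lra. lra.
Qed.

Lemma rho_pos : 0 < rho.
Proof.
  destruct W_spec as [H1 H2]. unfold rho.
  set (z := LambertW (-2 * exp (-2))) in *.
  pose proof (exp_pos z). pose proof (exp_pos (-2)).
  assert (z < 0). { destruct (Rlt_or_le z 0). auto. nra. }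
  lra.
Qed.

Lemma rho_le_half : rho <= 1/2.
Proof. destruct W_spec as [H1 H2]. unfold rho. lra. Qed.

Lemma ln_rho : ln rho = 2 * rho - 2.
Proof.
  destruct W_spec as [H1 H2]. pose proof rho_pos as Hp.
  assert (Hz : LambertW (-2 * exp (-2)) = -2 * rho) by (unfold rho; lra).
  rewrite Hz in H2.
  assert (rho = exp (2 * rho - 2)).
  { assert (E: exp (2*rho - 2) = exp (-2) / exp (-2*rho)).
    { unfold Rdiv. rewrite <- exp_Ropp, <- exp_plus. f_equal. lra. }
    rewrite E. pose proof (exp_pos (-2*rho)). field_simplify_eq; [lra|lra]. }
  rewrite H at 1. apply ln_exp.
Qed.

Definition f (x : R) : R := x * (x - 1 - ln x).

Lemma f_rho : f rho = rho * (1 - rho).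
Proof. unfold f. rewrite ln_rho. ring. Qed.

Lemma f_deriv c : 0 < c -> derivable_pt_lim f c (2*c - 2 - ln c).
Proof.
  intros Hc. apply is_derive_Reals. unfold f. auto_derive. lra. field. lra.
Qed.

Definition p (x : R) := 2 * x - ln x.

Lemma p_dec x y : 0 < x -> x < y -> y <= 1/2 -> p y < p x.
Proof.
  intros. unfold p. pose proof (ln_lt_sub1 (x/y)).
  rewrite ln_div in H2 by lra.
  assert (x / y <> 1). { intro E. apply Rmult_eq_compat_r with (r:=y) in E.
    field_simplify in E; lra. }
  specialize (H2 ltac:(apply Rdiv_lt_0_compat; lra) H3).
  assert (x/y - 1 = -(y-x)/y) by (field; lra). rewrite H4 in H2.
  assert (-(y-x)/y <= -2*(y-x)).
  { apply Rmult_le_reg_r with y. lra. field_simplify; nra. }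
  lra.
Qed.

Lemma p_inc x y : 1/2 <= x -> x < y -> p x < p y.
Proof.
  intros. unfold p. pose proof (ln_lt_sub1 (y/x)).
  rewrite ln_div in H1 by lra.
  assert (y / x <> 1). { intro E. apply Rmult_eq_compat_r with (r:=x) in E.
    field_simplify in E; lra. }
  specialize (H1 ltac:(apply Rdiv_lt_0_compat; lra) H2).
  assert (y/x - 1 = (y-x)/x) by (field; lra). rewrite H3 in H1.
  assert ((y-x)/x <= 2*(y-x)).
  { apply Rmult_le_reg_r with x. lra. field_simplify; nra. }
  lra.
Qed.

Lemma p_rho : p rho = 2.
Proof. unfold p. rewrite ln_rho. ring. Qed.

Lemma p_one : p 1 = 2.
Proof. unfold p. rewrite ln_1. ring. Qed.

Lemma f_inc x y : 0 < x -> x < y -> y <= rho -> f x < f y.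
Proof.
  intros. destruct (MVT_cor2 f (fun c => 2*c - 2 - ln c) x y H0) as [c [Hc1 Hc2]].
  { intros. apply f_deriv. lra. }
  pose proof rho_le_half. pose proof (p_dec c rho ltac:(lra) ltac:(lra) H2).
  rewrite p_rho in H3. unfold p in H3. nra.
Qed.

Lemma f_dec x y : rho <= x -> x < y -> y <= 1 -> f y < f x.
Proof.
  intros. pose proof rho_pos. destruct (MVT_cor2 f (fun c => 2*c - 2 - ln c) x y H0) as [c [Hc1 Hc2]].
  { intros. apply f_deriv. lra. }
  pose proof rho_le_half.
  assert (p c < 2).
  { destruct (Rle_or_lt c (1/2)).
    - rewrite <- p_rho. apply p_dec; lra.
    - rewrite <- p_one. apply p_inc; lra. }
  unfold p in H4. nra.
Qed.

Lemma f_max x : 0 < x <= 1 -> f x <= f rho.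
Proof.
  intros. destruct (Rtotal_order x rho) as [h|[h|h]].
  - left. apply f_inc; lra.
  - subst; lra.
  - left. apply f_dec; lra.
Qed.

Lemma f_sep eps : 0 < eps -> exists d, 0 < d /\ forall x, 0 < x <= 1 -> f rho - d < f x -> Rabs (x - rho) < eps.
Proof.
  intros He. pose proof rho_pos.
  set (d1 := if Rlt_dec 0 (rho - eps) then f rho - f (rho - eps) else 1).
  set (d2 := if Rle_dec (rho + eps) 1 then f rho - f (rho + eps) else 1).
  assert (0 < d1). { unfold d1. destruct Rlt_dec. pose proof (f_inc (rho-eps) rho r ltac:(lra) ltac:(lra)). lra. lra. }
  assert (0 < d2). { unfold d2. destruct Rle_dec. pose proof (f_dec rho (rho+eps) ltac:(lra) ltac:(lra) r). lra. lra. }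
  exists (Rmin d1 d2). split. apply Rmin_glb_lt; auto.
  intros x Hx Hf. apply Rabs_def1.
  - destruct (Rlt_or_le (x - rho) eps). auto. exfalso.
    assert (d2 = f rho - f (rho + eps)). { unfold d2. destruct Rle_dec. auto. lra. }
    pose proof (Rmin_r d1 d2).
    destruct (Req_dec x (rho+eps)). subst x. lra.
    pose proof (f_dec (rho+eps) x ltac:(lra) ltac:(lra) ltac:(lra)). lra.
  - destruct (Rlt_or_le (-eps) (x - rho)). auto. exfalso.
    assert (d1 = f rho - f (rho - eps)). { unfold d1. destruct Rlt_dec. auto. lra. }
    pose proof (Rmin_l d1 d2).
    destruct (Req_dec x (rho-eps)). subst x. lra.
    pose proof (f_inc x (rho-eps) ltac:(lra) ltac:(lra) ltac:(lra)). lra.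
Qed.

Definition SH j m := fold_right Rplus 0 (map (fun k : nat => 1 / (INR k - 1)) (seq (j+1) m)).



Lemma SH_S j m : (1 <= j)%nat -> SH j (S m) = / INR j + SH (S j) m.
Proof.
  intros. unfold SH. simpl. replace (S (j+1)) with (S j + 1)%nat by lia.
  f_equal. rewrite plus_INR. simpl. replace (INR j + 1 - 1) with (INR j) by ring.
  field. apply not_0_INR. lia.
Qed.

Lemma step_bounds j : (1 <= j)%nat ->
  / INR (S j) <= ln (INR (S j)) - ln (INR j) <= / INR j.
Proof.
  intros. assert (Hj : 1 <= INR j) by (apply (le_INR 1); lia).
  rewrite S_INR. split.
  - assert (0 < INR j / (INR j + 1)) by (apply Rdiv_lt_0_compat; lra).
    pose proof (ln_le_sub1 (INR j / (INR j + 1)) H0).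
    rewrite ln_div in H1 by lra.
    assert (INR j / (INR j + 1) - 1 = - / (INR j + 1)) by (field; lra).
    rewrite H2 in H1. lra.
  - assert (0 < (INR j + 1) / INR j) by (apply Rdiv_lt_0_compat; lra).
    pose proof (ln_le_sub1 ((INR j + 1) / INR j) H0).
    rewrite ln_div in H1 by lra.
    assert ((INR j + 1)/ INR j - 1 = / INR j) by (field; lra).
    rewrite H2 in H1. lra.
Qed.

Lemma SH_bounds m : forall j, (1 <= j)%nat ->
  ln (INR (j + m)) - ln (INR j) <= SH j m <= / INR j + ln (INR (j+m)) - ln (INR j).
Proof.
  induction m; intros j Hj.
  - unfold SH. simpl. rewrite Nat.add_0_r.
    assert (0 < / INR j) by (apply Rinv_0_lt_compat; apply lt_0_INR; lia). lra.
  - rewrite SH_S by auto. specialize (IHm (S j) ltac:(lia)).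
    replace (S j + m)%nat with (j + S m)%nat in IHm by lia.
    pose proof (step_bounds j Hj). lra.
Qed.

Lemma fold_lin (a b : R) (u : nat -> R) l :
  fold_right Rplus 0 (map (fun k => a * u k - b) l) =
  a * fold_right Rplus 0 (map u l) - b * INR (length l).
Proof.
  induction l; simpl. ring. rewrite IHl. destruct (length l). simpl. ring. rewrite S_INR. ring.
Qed.

Lemma EC_formula n r : (1 <= r <= n)%nat ->
  EC n r = (INR r / INR n) * ((INR n - 1)/INR n * SH r (n - r) - (INR n - INR r)/INR n).
Proof.
  intros Hr. unfold EC, SH.
  assert (Hn : 0 < INR n) by (apply lt_0_INR; lia).
  rewrite (map_ext_in _ (fun k => (INR n - 1)/INR n * (1 / (INR k - 1)) - / INR n)).
  - rewrite fold_lin, length_seq, minus_INR by lia. f_equal. field. lra.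
  - intros k Hk. apply in_seq in Hk.
    assert (2 <= INR k) by (apply (le_INR 2); lia).
    field. lra.
Qed.

Lemma EC_approx n r : (1 <= r <= n)%nat -> Rabs (EC n r - f (INR r / INR n)) <= / INR n.
Proof.
  intros Hr. rewrite EC_formula by auto.
  assert (Hn : 0 < INR n) by (apply lt_0_INR; lia).
  assert (Hr1 : 1 <= INR r) by (apply (le_INR 1); lia).
  assert (Hrn : INR r <= INR n) by (apply le_INR; lia).
  pose proof (SH_bounds (n - r) r ltac:(lia)) as [L U].
  replace (r + (n - r))%nat with n in L, U by lia.
  set (S := SH r (n - r)) in *.
  set (D := ln (INR n) - ln (INR r)) in *.
  unfold f. rewrite ln_div by lra. fold (ln (INR r) - ln (INR n)).
  replace (ln (INR r) - ln (INR n)) with (- D) by (unfold D; ring).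
  assert (HD : D <= INR n / INR r - 1).
  { unfold D. rewrite <- ln_div by lra. apply ln_le_sub1. apply Rdiv_lt_0_compat; lra. }
  assert (HD0 : 0 <= D).
  { unfold D. destruct (Req_dec (INR r) (INR n)). rewrite H. lra.
    pose proof (ln_increasing (INR r) (INR n) ltac:(lra) ltac:(lra)). lra. }
  set (x := INR r / INR n).
  assert (Hx : 0 < x <= 1). { unfold x. split. apply Rdiv_lt_0_compat; lra.
    apply Rmult_le_reg_r with (INR n). lra. field_simplify; lra. }
  assert (xr : x * / INR r = / INR n) by (unfold x; field; lra).
  assert (xD : x * D <= 1).
  { assert (x * (INR n / INR r - 1) = 1 - x) by (unfold x; field; lra). nra. }
  assert (Hq : 0 <= (INR n - 1) / INR n <= 1).
  { split. apply Rdiv_le_0_compat; lra. apply Rmult_le_reg_r with (INR n). lra. field_simplify; lra. }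
  assert (Hdn : 0 <= x * D / INR n <= / INR n).
  { assert (0 < / INR n) by (apply Rinv_0_lt_compat; lra). unfold Rdiv.
    assert (0 <= x * D) by nra. split. apply Rmult_le_pos; lra.
    pose proof (Rmult_le_compat_r (/ INR n) _ _ ltac:(lra) xD). lra. }
  assert (E : x * ((INR n - 1) / INR n * S - (INR n - INR r) / INR n) - x * (x - 1 - - D)
      = (INR n - 1) / INR n * (x * (S - D)) - x * D / INR n).
  { unfold x. field. lra. }
  rewrite E. apply Rabs_le_between.
  assert (S - D <= / INR r) by (unfold D; lra).
  assert (0 <= x * (S - D) <= x * / INR r).
  { split. apply Rmult_le_pos; lra. apply Rmult_le_compat_l; lra. }
  assert (0 <= (INR n - 1) / INR n * (x * (S - D)) <= x * (S - D)).
  { split. apply Rmult_le_pos; lra. pose proof (Rmult_le_compat_r (x * (S - D)) _ _ ltac:(lra) (proj2 Hq)). lra. }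
  lra.
Qed.

Lemma floor_spec x : 0 <= x -> INR (nat_floor x) <= x < INR (nat_floor x) + 1.
Proof.
  intros Hx. unfold nat_floor. destruct (base_Int_part x) as [H1 H2].
  assert (0 <= Int_part x)%Z.
  { assert (-1 < IZR (Int_part x)) by lra. apply lt_IZR in H. lia. }
  rewrite INR_IZR_INZ, Z2Nat.id by auto. lra.
Qed.

Lemma inv_lim : is_lim_seq (fun n => / INR n) 0.
Proof.
  assert (H := is_lim_seq_inv INR p_infty is_lim_seq_INR ltac:(discriminate)).
  simpl in H. exact H.
Qed.

Lemma lim_close (u v : nat -> R) (l : R) N :
  (forall n, (N <= n)%nat -> Rabs (u n - v n) <= / INR n) -> is_lim_seq v l -> is_lim_seq u l.
Proof.
  intros H Hv.
  apply is_lim_seq_le_le_loc with (fun n => v n - / INR n) (fun n => v n + / INR n).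
  - exists N. intros n Hn. specialize (H n Hn). apply Rabs_le_between in H. lra.
  - replace (Finite l) with (Finite (l - 0)) by (f_equal; ring).
    apply is_lim_seq_minus'; auto. apply inv_lim.
  - replace (Finite l) with (Finite (l + 0)) by (f_equal; ring).
    apply is_lim_seq_plus'; auto. apply inv_lim.
Qed.

Lemma f_cont : continuity_pt f rho.
Proof.
  apply derivable_continuous_pt. exists (2*rho - 2 - ln rho). apply f_deriv. apply rho_pos.
Qed.

Theorem proposition3 :
  forall M : nat -> nat,
    (forall n : nat, (1 < n)%nat ->
       (1 <= M n <= n - 1)%nat /\
       (forall r : nat, (1 <= r <= n - 1)%nat -> EC n r <= EC n (M n))) ->
    is_lim_seq (fun n => INR (M n) / INR n) rho /\
    is_lim_seq (fun n => EC n (M n)) (rho * (1 - rho)) /\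
    is_lim_seq (fun n => EC n (nat_floor (rho * INR n))) (rho * (1 - rho)).
Proof.
  intros M HM.
  pose proof rho_pos as Hr0. pose proof rho_le_half as Hr2.
  set (fl := fun n => nat_floor (rho * INR n)).
  destruct (archimed_cor1 rho Hr0) as [N0 [HN0 HN0']].
  assert (Hfl : forall n, (N0 <= n)%nat -> (2 <= n)%nat -> (1 <= fl n <= n - 1)%nat).
  { intros n H1 H2.
    assert (HnN : INR N0 <= INR n) by (apply le_INR; auto).
    assert (0 < INR N0) by (apply lt_0_INR; lia).
    assert (2 <= INR n) by (apply (le_INR 2); auto).
    assert (1 < rho * INR n).
    { assert (rho * INR N0 > 1).
      { apply Rmult_lt_compat_r with (r := INR N0) in HN0; auto.
        rewrite Rinv_l in HN0 by lra. lra. }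
      nra. }
    destruct (floor_spec (rho * INR n) ltac:(nra)) as [F1 F2].
    fold (fl n) in F1, F2. split.
    - assert (INR 0 < INR (fl n)) by (simpl; lra). apply INR_lt in H4. lia.
    - assert (INR (fl n) < INR n) by nra. apply INR_lt in H4. lia. }
  assert (Hflim : is_lim_seq (fun n => INR (fl n) / INR n) rho).
  { apply lim_close with (fun _ => rho) 1%nat; [|apply is_lim_seq_const].
    intros n Hn. assert (1 <= INR n) by (apply (le_INR 1); auto).
    destruct (floor_spec (rho * INR n) ltac:(nra)) as [F1 F2]. fold (fl n) in F1, F2.
    apply Rabs_le_between.
    assert (E : INR (fl n) / INR n - rho = (INR (fl n) - rho * INR n) * / INR n) by (field; lra).
    rewrite E. assert (0 < / INR n) by (apply Rinv_0_lt_compat; lra). split; nra. }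
  assert (P3 : is_lim_seq (fun n => EC n (fl n)) (rho * (1 - rho))).
  { rewrite <- f_rho.
    apply lim_close with (fun n => f (INR (fl n) / INR n)) (max N0 2).
    - intros n Hn. apply EC_approx. pose proof (Hfl n ltac:(lia) ltac:(lia)). lia.
    - apply (is_lim_seq_continuous f _ rho f_cont Hflim). }
  assert (P2 : is_lim_seq (fun n => EC n (M n)) (rho * (1 - rho))).
  { apply is_lim_seq_le_le_loc with (fun n => EC n (fl n)) (fun n => rho * (1 - rho) + / INR n).
    - exists (max N0 2). intros n Hn. split.
      + apply (HM n ltac:(lia)). apply Hfl; lia.
      + destruct (HM n ltac:(lia)) as [HMn _].
        pose proof (EC_approx n (M n) ltac:(lia)). apply Rabs_le_between in H.
        assert (0 < INR (M n) / INR n <= 1).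
        { assert (1 <= INR (M n)) by (apply (le_INR 1); lia).
          assert (INR (M n) <= INR n) by (apply le_INR; lia).
          split. apply Rdiv_lt_0_compat; lra.
          apply Rmult_le_reg_r with (INR n). lra. field_simplify; lra. }
        pose proof (f_max _ H0). rewrite f_rho in H1. lra.
    - exact P3.
    - replace (Finite (rho * (1 - rho))) with (Finite (rho * (1 - rho) + 0)) by (f_equal; ring).
      apply is_lim_seq_plus'. apply is_lim_seq_const. apply inv_lim. }
  split; [|split; auto].
  apply is_lim_seq_Reals. intros eps Heps.
  destruct (f_sep eps Heps) as [d [Hd Hsep]].
  apply is_lim_seq_Reals in P2.
  destruct (P2 (d/2) ltac:(lra)) as [N1 HN1].
  destruct (archimed_cor1 (d/2) ltac:(lra)) as [N2 [HN2 HN2']].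
  exists (max N1 (max N2 2)). intros n Hn.
  specialize (HN1 n ltac:(lia)). unfold R_dist in *.
  destruct (HM n ltac:(lia)) as [HMn _].
  pose proof (EC_approx n (M n) ltac:(lia)). apply Rabs_le_between in H.
  assert (0 < INR (M n) / INR n <= 1).
  { assert (1 <= INR (M n)) by (apply (le_INR 1); lia).
    assert (INR (M n) <= INR n) by (apply le_INR; lia).
    split. apply Rdiv_lt_0_compat; lra.
    apply Rmult_le_reg_r with (INR n). lra. field_simplify; lra. }
  apply Hsep; auto.
  assert (/ INR n <= / INR N2).
  { apply Rinv_le_contravar. apply lt_0_INR; lia. apply le_INR; lia. }
  rewrite f_rho. apply Rabs_def2 in HN1. lra.
Qed.
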